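(* Let $(X,(\cdot,\cdot|\cdot))$ be a 2-inner product space over $\mathbb{K}\in\{\mathbb{R},\mathbb{C}\}$, let $n$ be a positive integer, let $x,y_1,\dots,y_n,z\in X$, and let $p>1$, $q$ with $\frac1p+\frac1q=1$. Then \[ \sum_{i=1}^{n}\left|(x,y_i|z)\right|^2\le \|x|z\|\Big(\sum_{i=1}^n\left|(x,y_i|z)\right|^{2p}\Big)^{\frac{1}{2p}}\left\{\Big(\sum_{i=1}^n\|y_i|z\|^{2q}\Big)^{\frac1q}+(n-1)^{\frac1p}\Big(\sum_{1\le i\ne j\le n}\left|(y_i,y_j|z)\right|^{q}\Big)^{\frac1q}\right\}^{1/2}. \]
   Context: A 2-inner product on a linear space $X$ of dimension greater than $1$ over $\mathbb{K}$ ($\mathbb{K}=\mathbb{R}$ or $\mathbb{C}$) is a function $(\cdot,\cdot|\cdot):X\times X\times X\to\mathbb{K}$ such that for all $x,x',y,z\in X$ and $\alpha\in\mathbb{K}$: (i) $(x,x|z)\ge 0$, and $(x,x|z)=0$ iff $x$ and $z$ are linearly dependent; (ii) $(x,x|z)=(z,z|x)$; (iii) $(y,x|z)=\overline{(x,y|z)}$; (iv) $(\alpha x,y|z)=\alpha(x,y|z)$; (v) $(x+x',y|z)=(x,y|z)+(x',y|z)$. The associated 2-norm is $\|x|z\|=\sqrt{(x,x|z)}$. The sum $\sum_{1\le i\ne j\le n}$ runs over all ordered pairs $(i,j)$ with $i\ne j$. *)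

(* Defs.v *)
From HB Require Import structures.
From mathcomp Require Import all_boot all_order all_algebra.
From mathcomp Require Import all_classical all_reals.
From mathcomp Require Import exp.
From mathcomp Require Import complex.
Set Implicit Arguments. Unset Strict Implicit. Unset Printing Implicit Defensive.
Import Order.TTheory GRing.Theory Num.Theory.
Local Open Scope ring_scope.

Definition lin_dep (K : numDomainType) (X : lmodType K) (x z : X) : Prop :=
  exists a b : K, (a != 0 \/ b != 0) /\ a *: x + b *: z = 0.

(* A 2-inner product on a linear space X over K (of dimension > 1),
   where conjK is the conjugation of K (identity for K = R). *)
Definition is_2inner_product (K : numDomainType) (conjK : K -> K)
    (X : lmodType K) (ip : X -> X -> X -> K) : Prop :=
  (exists u v : X, ~ lin_dep u v) /\
  (forall x z, 0 <= ip x x z) /\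
  (forall x z, ip x x z = 0 <-> lin_dep x z) /\
  (forall x z, ip x x z = ip z z x) /\
  (forall x y z, ip y x z = conjK (ip x y z)) /\
  (forall (a : K) x y z, ip (a *: x) y z = a * ip x y z) /\
  (forall x x' y z, ip (x + x') y z = ip x y z + ip x' y z).

(* The inequality of the theorem, for a scalar field K with modulus
   absK : K -> R (valued in the reals R). The 2-norm is
   ||x|z|| = sqrt((x,x|z)), computed as sqrt |(x,x|z)| since (x,x|z) >= 0. *)
Definition ineq_2ip (R : realType) (K : numDomainType) (absK : K -> R)
    (X : lmodType K) (ip : X -> X -> X -> K)
    (n : nat) (x : X) (y : 'I_n -> X) (z : X) (p q : R) : Prop :=
  let norm2 (u w : X) : R := Num.sqrt (absK (ip u u w)) in
  \sum_(i < n) absK (ip x (y i) z) ^+ 2 <=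
    norm2 x z
    * (\sum_(i < n) absK (ip x (y i) z) `^ (2 * p)) `^ (2 * p)^-1
    * ((\sum_(i < n) norm2 (y i) z `^ (2 * q)) `^ q^-1
       + (n.-1)%:R `^ p^-1
         * (\sum_(i < n) \sum_(j < n | j != i) absK (ip (y i) (y j) z) `^ q)
             `^ q^-1) `^ (2^-1).

(* Main.v *)
Require Import Defs.
From HB Require Import structures.
From mathcomp Require Import all_boot all_order all_algebra.
From mathcomp Require Import all_classical all_reals.
From mathcomp Require Import exp.
From mathcomp Require Import complex.
Import Order.TTheory GRing.Theory Num.Theory.
Local Open Scope ring_scope.
From mathcomp Require Import ring lra.
Section Real.
Variable R : realType.

Lemma powR_invK (U p : R) : 0 <= U -> 0 < p -> (U `^ p^-1) `^ p = U.
Proof. Set Default Timeout 20.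
move=> U0 p0; by rewrite -powRrM mulVf ?gt_eqF // powRr1.
Qed.

Lemma powR_inv (a p : R) : 0 < a -> (a^-1) `^ p = (a `^ p)^-1.
Proof. Set Default Timeout 20.
move=> a0; apply: (@mulIf _ (a `^ p)); first by rewrite gt_eqF // powR_gt0.
by rewrite -powRM ?invr_ge0 ?ltW // mulVf ?gt_eqF // powR1 mulVf // gt_eqF // powR_gt0.
Qed.

Lemma holder (I : finType) (P : pred I) (u v : I -> R) (p q : R) :
  0 < p -> 0 < q -> p^-1 + q^-1 = 1 ->
  (forall i, 0 <= u i) -> (forall i, 0 <= v i) ->
  \sum_(i | P i) u i * v i <=
  (\sum_(i | P i) u i `^ p) `^ p^-1 * (\sum_(i | P i) v i `^ q) `^ q^-1.
Proof. Set Default Timeout 20.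
move=> p0 q0 pq u0 v0.
set U := \sum_(i | P i) u i `^ p; set V := \sum_(i | P i) v i `^ q.
have U0 : 0 <= U by apply: sumr_ge0 => i _; exact: powR_ge0.
have V0 : 0 <= V by apply: sumr_ge0 => i _; exact: powR_ge0.
have [Ue|Upos] := eqVneq U 0.
  have: forall i, P i -> u i = 0.
    move=> i Pi; apply: (@powR_eq0_eq0 _ _ p).
    by apply: (psumr_eq0P _ Ue) => // j _; exact: powR_ge0.
  move=> H; rewrite big1 ?mulr_ge0 ?powR_ge0 // => i Pi; by rewrite H // mul0r.
have [Ve|Vpos] := eqVneq V 0.
  have: forall i, P i -> v i = 0.
    move=> i Pi; apply: (@powR_eq0_eq0 _ _ q).
    by apply: (psumr_eq0P _ Ve) => // j _; exact: powR_ge0.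
  move=> H; rewrite big1 ?mulr_ge0 ?powR_ge0 // => i Pi; by rewrite H // mulr0.
have Ug : 0 < U by rewrite lt_def Upos U0.
have Vg : 0 < V by rewrite lt_def Vpos V0.
set a := U `^ p^-1; set b := V `^ q^-1.
have ag : 0 < a by apply: powR_gt0.
have bg : 0 < b by apply: powR_gt0.
have ap : a `^ p = U by apply: powR_invK.
have bq : b `^ q = V by apply: powR_invK.
clearbody a b.
have key : forall i, u i * v i <= (a * b / (p * U)) * u i `^ p + (a * b / (q * V)) * v i `^ q.
  move=> i.
  have H := conjugate_powR (divr_ge0 (u0 i) (ltW ag)) (divr_ge0 (v0 i) (ltW bg)) p0 q0 pq.
  rewrite (powRM _ (u0 i)) ?invr_ge0 ?(ltW ag) // in H.
  rewrite (powRM _ (v0 i)) ?invr_ge0 ?(ltW bg) // in H.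
  rewrite !powR_inv // ap bq in H.
  have ab : 0 < a * b by apply: mulr_gt0.
  rewrite (_ : u i * v i = a * b * (u i / a * (v i / b))); last first.
    by field; rewrite ?gt_eqF.
  apply: le_trans; first by apply: ler_wpM2l; [exact: ltW | exact: H].
  rewrite le_eqVlt; apply/orP; left; apply/eqP.
  by field; rewrite ?gt_eqF // ?mulr_gt0.
apply: (le_trans (ler_sum _ (fun i _ => key i))).
rewrite big_split /= -!mulr_sumr -/U -/V.
rewrite le_eqVlt; apply/orP; left; apply/eqP.
have -> : a * b / (p * U) * U + a * b / (q * V) * V = a * b * (p^-1 + q^-1).
  by field; rewrite ?gt_eqF.
by rewrite pq mulr1.
Qed.

Lemma powR2p (a p : R) : 0 <= a -> a `^ (2 * p) = (a ^+ 2) `^ p.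
Proof. by move=> a0; rewrite powRrM -powR_mulrn. Qed.

Lemma sq_powR_half (P p : R) : 0 <= P -> 0 < p ->
  (P `^ (2 * p)^-1) ^+ 2 = P `^ p^-1.
Proof.
move=> P0 p0; rewrite -powR_mulrn ?powR_ge0 // -powRrM; congr (_ `^ _).
by field; rewrite gt_eqF.
Qed.

Lemma sum_offdiag n (f : 'I_n -> R) :
  \sum_i \sum_(j | j != i) f j = (n.-1)%:R * \sum_i f i.
Proof.
have -> : \sum_i \sum_(j | j != i) f j = \sum_(i < n) (\sum_j f j - f i).
  apply: eq_bigr => i _; rewrite [\sum_j f j](bigD1 i) //=.
  by rewrite addrC addrK.
rewrite sumrB sumr_const card_ord.
case: n f => [|n] f; first by rewrite !big_ord0 mul0r subr0 mul0rn.
by rewrite /= mulrSr addrK mulr_natl.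
Qed.

Lemma sum_offdiag2 n (f : 'I_n -> R) :
  \sum_i \sum_(j | j != i) f i = (n.-1)%:R * \sum_i f i.
Proof.
rewrite mulr_sumr; apply: eq_bigr => i _.
rewrite sumr_const mulr_natl; congr (_ *+ _).
have := cardC1 i; rewrite card_ord => <-.
by apply: eq_card => j.
Qed.

Lemma amgm2 (s t : R) : s * t <= (s ^+ 2 + t ^+ 2) / 2.
Proof. have : 0 <= (s - t) ^+ 2 by apply: sqr_ge0. lra. Qed.

Lemma sq_le (s t : R) : 0 <= s -> 0 <= t -> s ^+ 2 <= t ^+ 2 -> s <= t.
Proof. move=> *; nra. Qed.

Lemma pairS n (F : 'I_n -> 'I_n -> R) :
  \sum_i \sum_(j | j != i) F i j = \sum_(k : 'I_n * 'I_n | k.2 != k.1) F k.1 k.2.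
Proof. by rewrite pair_big_dep. Qed.

Lemma holderT (I : finType) (u v : I -> R) (p q : R) :
  0 < p -> 0 < q -> p^-1 + q^-1 = 1 ->
  (forall i, 0 <= u i) -> (forall i, 0 <= v i) ->
  \sum_i u i * v i <=
  (\sum_i u i `^ p) `^ p^-1 * (\sum_i v i `^ q) `^ q^-1.
Proof. move=> *; exact: (@holder I xpredT). Qed.

Lemma real_main n (a : 'I_n -> R) (g : 'I_n -> 'I_n -> R) (A p q : R) :
  (forall i, 0 <= a i) -> (forall i j, 0 <= g i j) -> 0 <= A -> 1 < p ->
  p^-1 + q^-1 = 1 ->
  (\sum_i a i ^+ 2) ^+ 2 <= A * \sum_i \sum_j a i * a j * g i j ->
  \sum_i a i ^+ 2 <= Num.sqrt A * (\sum_i a i `^ (2 * p)) `^ (2 * p)^-1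
     * ((\sum_i Num.sqrt (g i i) `^ (2 * q)) `^ q^-1
       + (n.-1)%:R `^ p^-1 * (\sum_i \sum_(j | j != i) g i j `^ q) `^ q^-1)
       `^ (2^-1).
Proof.
move=> a0 g0 A0 p1 pq H.
have p0 : 0 < p by apply: lt_trans p1.
have ip1 : p^-1 < 1 by rewrite invf_lt1.
have hq : q^-1 = 1 - p^-1 by rewrite -pq; ring.
have q0 : 0 < q by rewrite -invr_gt0 hq subr_gt0.
set Pa := \sum_i a i `^ (2 * p).
set Q1 := \sum_i Num.sqrt (g i i) `^ (2 * q).
set Q2 := \sum_i \sum_(j | j != i) g i j `^ q.
have Pa0 : 0 <= Pa by apply: sumr_ge0 => i _; exact: powR_ge0.
have Q10 : 0 <= Q1 by apply: sumr_ge0 => i _; exact: powR_ge0.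
have Q20 : 0 <= Q2 by apply: sumr_ge0 => i _; apply: sumr_ge0 => j _; exact: powR_ge0.
set B := Q1 `^ q^-1 + (n.-1)%:R `^ p^-1 * Q2 `^ q^-1.
have B0 : 0 <= B by rewrite addr_ge0 ?mulr_ge0 ?powR_ge0.
have E1 : \sum_i \sum_j a i * a j * g i j =
    \sum_i a i ^+ 2 * g i i + \sum_i \sum_(j | j != i) (a i * a j) * g i j.
  rewrite -big_split /=; apply: eq_bigr => i _.
  by rewrite (bigD1 i) //= expr2.
have S1 : \sum_i a i ^+ 2 * g i i <= Pa `^ p^-1 * Q1 `^ q^-1.
  have h1 : \sum_i a i ^+ 2 * g i i <=
     (\sum_i (a i ^+ 2) `^ p) `^ p^-1 * (\sum_i g i i `^ q) `^ q^-1
    := holderT _ (fun i => a i ^+ 2) (fun i => g i i) _ _ p0 q0 pq (fun i => sqr_ge0 (a i)) (fun i => g0 i i).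
  have e1 : \sum_i (a i ^+ 2) `^ p = Pa.
    by apply: eq_bigr => i _; rewrite powR2p.
  have e2 : \sum_i g i i `^ q = Q1.
    by apply: eq_bigr => i _; rewrite powR2p ?sqrtr_ge0 // sqr_sqrtr.
  by rewrite e1 e2 in h1.
have S2 : \sum_i \sum_(j | j != i) (a i * a j) * g i j <=
     ((n.-1)%:R * Pa) `^ p^-1 * Q2 `^ q^-1.
  have h2 : \sum_(k : 'I_n * 'I_n | k.2 != k.1) (a k.1 * a k.2) * g k.1 k.2 <=
     (\sum_(k : 'I_n * 'I_n | k.2 != k.1) (a k.1 * a k.2) `^ p) `^ p^-1 *
     (\sum_(k : 'I_n * 'I_n | k.2 != k.1) g k.1 k.2 `^ q) `^ q^-1
    := holder _ (fun k : 'I_n * 'I_n => k.2 != k.1) (fun k => a k.1 * a k.2) (fun k => g k.1 k.2) _ _ p0 q0 pq (fun k => mulr_ge0 (a0 k.1) (a0 k.2)) (fun k => g0 k.1 k.2).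
  rewrite -(pairS _ (fun i j => (a i * a j) `^ p)) -(pairS _ (fun i j => g i j `^ q)) in h2.
  rewrite -(pairS _ (fun i j => (a i * a j) * g i j)) in h2.
  apply: (le_trans h2); apply: ler_wpM2r; first exact: powR_ge0.
  apply: ge0_ler_powR.
  - by rewrite invr_ge0 ltW.
  - by rewrite nnegrE; apply: sumr_ge0 => i _; apply: sumr_ge0 => j _; exact: powR_ge0.
  - by rewrite nnegrE mulr_ge0 // ler0n.
  apply: (@le_trans _ _ (\sum_i \sum_(j | j != i) (a i `^ (2 * p) + a j `^ (2 * p)) / 2)).
    apply: ler_sum => i _; apply: ler_sum => j _.
    rewrite powRM // !powR2p //.
    have hx : ((a i) `^ p) ^+ 2 = (a i ^+ 2) `^ p.
      by rewrite -(powR_mulrn 2 (powR_ge0 (a i) p)) -(powR_mulrn 2 (a0 i)) -!powRrM mulrC.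
    have hy : ((a j) `^ p) ^+ 2 = (a j ^+ 2) `^ p.
      by rewrite -(powR_mulrn 2 (powR_ge0 (a j) p)) -(powR_mulrn 2 (a0 j)) -!powRrM mulrC.
    rewrite -hx -hy.
    exact: amgm2.
  have -> : \sum_i \sum_(j | j != i) (a i `^ (2 * p) + a j `^ (2 * p)) / 2 =
     ((\sum_i \sum_(j | j != i) a i `^ (2 * p)) + \sum_i \sum_(j | j != i) a j `^ (2 * p)) / 2.
    rewrite -big_split /= mulr_suml; apply: eq_bigr => i _.
    by rewrite -big_split /= mulr_suml.
  rewrite sum_offdiag sum_offdiag2 -/Pa.
  by rewrite -mulr2n -(mulr_natr ((n.-1)%:R * Pa) 2) mulfK // pnatr_eq0.
have T : \sum_i \sum_j a i * a j * g i j <= Pa `^ p^-1 * B.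
  rewrite E1 /B mulrDr; apply: lerD; first exact: S1.
  apply: (le_trans S2).
  rewrite (powRM _ (ler0n _ _) Pa0).
  by rewrite le_eqVlt; apply/orP; left; apply/eqP; ring.
have Hfin : (\sum_i a i ^+ 2) ^+ 2 <= A * (Pa `^ p^-1 * B).
  apply: (le_trans H); apply: ler_wpM2l; [exact: A0 | exact: T].
set S := \sum_i a i ^+ 2.
have S0 : 0 <= S by apply: sumr_ge0 => i _; exact: sqr_ge0.
set RHS := Num.sqrt A * Pa `^ (2 * p)^-1 * B `^ 2^-1.
have R0 : 0 <= RHS.
  apply: mulr_ge0; last exact: powR_ge0.
  apply: mulr_ge0; [exact: sqrtr_ge0 | exact: powR_ge0].
have R2 : RHS ^+ 2 = A * (Pa `^ p^-1 * B).
  rewrite /RHS !exprMn sqr_sqrtr // sq_powR_half // powR12_sqrt // sqr_sqrtr //.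
  by rewrite mulrA.
rewrite -/S -/RHS.
move: Hfin; rewrite -R2 => Hfin.
exact: sq_le.
Qed.
End Real.
Lemma quad (R : realType) (A C b : R) : 0 <= A -> 0 <= C -> 0 <= b ->
  (forall s, 0 <= A - 2 * s * b + s ^+ 2 * b * C) -> b <= A * C.
Proof.
move=> A0 C0 b0 h.
have [->|bn0] := eqVneq b 0; first by rewrite mulr_ge0.
have bg : 0 < b by rewrite lt_def bn0 b0.
have [Ce|Cn0] := eqVneq C 0.
  have := h ((A + 1) / b / 2).
  rewrite Ce mulr0 addr0.
  rewrite (_ : A - 2 * ((A + 1) / b / 2) * b = -1); last by field; rewrite gt_eqF.
  by rewrite oppr_ge0 ler10.
have Cg : 0 < C by rewrite lt_def Cn0 C0.
have := h (C^-1).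
rewrite (_ : A - 2 * C^-1 * b + C^-1 ^+ 2 * b * C = A - b / C); last by field; rewrite gt_eqF.
by rewrite subr_ge0 ler_pdivrMr.
Qed.

Section Space.
Variables (R : realType) (K : numDomainType) (cj : K -> K)
  (iota : {rmorphism R -> K}) (phi : K -> R).
Hypotheses (cjD : forall a b, cj (a + b) = cj a + cj b)
  (cjM : forall a b, cj (a * b) = cj a * cj b)
  (cjI : forall r, cj (iota r) = iota r)
  (iota_ge0 : forall r, 0 <= iota r -> 0 <= r)
  (nonneg : forall a, 0 <= a -> a = iota (phi a))
  (mulcj : forall a, a * cj a = iota (phi a ^+ 2))
  (phiM : forall a b, phi (a * b) = phi a * phi b)
  (phiD : forall a b, phi (a + b) <= phi a + phi b)
  (phi_ge0 : forall a, 0 <= phi a)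
  (phicj : forall a, phi (cj a) = phi a)
  (phiI : forall r, phi (iota r) = `|r|).
Variables (X : lmodType K) (ip : X -> X -> X -> K).
Hypotheses (ipge0 : forall x z, 0 <= ip x x z)
  (ipC : forall x y z, ip y x z = cj (ip x y z))
  (ipZ : forall (a : K) x y z, ip (a *: x) y z = a * ip x y z)
  (ipD : forall x x' y z, ip (x + x') y z = ip x y z + ip x' y z).

Lemma cj0 : cj 0 = 0.
Proof. by rewrite -(rmorph0 iota) cjI. Qed.

Lemma cjN a : cj (- a) = - cj a.
Proof.
apply/eqP; rewrite -subr_eq0 opprK -cjD addNr.
by rewrite cj0.
Qed.

Lemma ip0 y z : ip 0 y z = 0.
Proof. by rewrite -(scale0r 0) ipZ mul0r. Qed.

Lemma ipDr x y y' z : ip x (y + y') z = ip x y z + ip x y' z.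
Proof. by rewrite (ipC (y + y')) ipD cjD -!ipC. Qed.

Lemma ipZr (a : K) x y z : ip x (a *: y) z = cj a * ip x y z.
Proof. by rewrite (ipC (a *: y)) ipZ cjM -ipC. Qed.

Lemma ip0r x z : ip x 0 z = 0.
Proof. by rewrite (ipC 0) ip0 cj0. Qed.

Lemma ipsum n (F : 'I_n -> X) y z :
  ip (\sum_i F i) y z = \sum_i ip (F i) y z.
Proof.
exact: (big_morph (fun v => ip v y z) (fun a b => ipD a b y z) (ip0 y z)).
Qed.

Lemma ipsumr n x (F : 'I_n -> X) z :
  ip x (\sum_i F i) z = \sum_i ip x (F i) z.
Proof.
exact: (big_morph (fun v => ip x v z) (fun a b => ipDr x a b z) (ip0r x z)).
Qed.

Lemma phi_sum n (F : 'I_n -> K) : phi (\sum_i F i) <= \sum_i phi (F i).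
Proof.
apply: (big_ind2 (fun a b => phi a <= b)).
- by rewrite -(rmorph0 iota) phiI normr0.
- move=> a1 b1 a2 b2 h1 h2; apply: le_trans (phiD _ _) _; exact: lerD.
- by [].
Qed.

Lemma CS x w z : phi (ip x w z) ^+ 2 <= phi (ip x x z) * phi (ip w w z).
Proof.
set b := ip x w z; set A := phi (ip x x z); set C := phi (ip w w z).
apply: quad; [exact: phi_ge0 | exact: phi_ge0 | exact: sqr_ge0 |].
move=> s; apply: iota_ge0.
set t := iota s * b.
have H := ipge0 (x + (- t) *: w) z.
rewrite ipD !ipDr !ipZ !ipZr in H.
rewrite (ipC x w) -/b (nonneg _ (ipge0 x z)) (nonneg _ (ipge0 w z)) -/A -/C in H.
rewrite cjN /t cjM cjI in H.
have e : b * cj b = iota (phi b ^+ 2) by apply: mulcj.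
rewrite !rmorphD /= !rmorphN /= !rmorphM /=.
rewrite -(rmorphM iota (phi b) (phi b)) -expr2 -e.
rewrite (_ : iota 2 = 2); last by rewrite rmorph_nat.
move: H; set u := iota s; set cb := cj b; set iA := iota A; set iC := iota C.
move=> H.
suff -> : iA - 2 * u * (b * cb) + u * u * (b * cb) * iC =
  iA + - (u * cb) * b + (- (u * b) * cb + - (u * b) * (- (u * cb) * iC)) by [].
ring.
Qed.

Lemma space_main n x (y : 'I_n -> X) z :
  (\sum_i phi (ip x (y i) z) ^+ 2) ^+ 2 <=
  phi (ip x x z) * \sum_i \sum_j phi (ip x (y i) z) * phi (ip x (y j) z)
     * phi (ip (y i) (y j) z).
Proof.
set u := \sum_i ip x (y i) z *: y i.
have E1 : ip x u z = iota (\sum_i phi (ip x (y i) z) ^+ 2).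
  rewrite ipsumr rmorph_sum; apply: eq_bigr => i _.
  by rewrite ipZr mulrC mulcj.
have S0 : 0 <= \sum_i phi (ip x (y i) z) ^+ 2 by apply: sumr_ge0 => i _; exact: sqr_ge0.
have := CS x u z.
rewrite E1 phiI ger0_norm // => H.
apply: (le_trans H); apply: ler_wpM2l; first exact: phi_ge0.
rewrite ipsum.
apply: le_trans (phi_sum _ _) _.
apply: ler_sum => i _.
rewrite ipZ phiM ipsumr.
apply: le_trans (ler_wpM2l (phi_ge0 _) (phi_sum _ _)) _.
rewrite mulr_sumr; apply: ler_sum => j _.
rewrite ipZr phiM phicj.
by rewrite le_eqVlt; apply/orP; left; apply/eqP; ring.
Qed.
End Space.
Section Cplx.
Variable R : realType.
Implicit Types a b : R[i].

Lemma phiE a : complex.Re `|a| = Num.sqrt (complex.Re a ^+ 2 + complex.Im a ^+ 2).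
Proof. by rewrite normc_def. Qed.

Lemma c_cjD a b : conjc (a + b) = conjc a + conjc b.
Proof. by rewrite rmorphD. Qed.
Lemma c_cjM a b : conjc (a * b) = conjc a * conjc b.
Proof. by rewrite rmorphM. Qed.
Lemma c_cjI (r : R) : conjc (real_complex R r) = real_complex R r.
Proof. exact: conjc_real. Qed.
Lemma c_iota_ge0 (r : R) : 0 <= real_complex R r -> 0 <= r.
Proof. by rewrite ler0c. Qed.
Lemma c_nonneg a : 0 <= a -> a = real_complex R (complex.Re `|a|).
Proof. by move=> a0; rewrite ger0_norm // RRe_real // ger0_real. Qed.
Lemma c_phi_ge0 a : 0 <= complex.Re `|a|.
Proof. by rewrite phiE sqrtr_ge0. Qed.
Lemma c_mulcj a : a * conjc a = real_complex R (complex.Re `|a| ^+ 2).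
Proof.
rewrite phiE sqr_sqrtr ?addr_ge0 ?sqr_ge0 //.
case: a => a1 a2 /=; simpc; apply/eqP; rewrite eq_complex /=.
by apply/andP; split; apply/eqP; ring.
Qed.
Lemma c_phiM a b : complex.Re `|a * b| = complex.Re `|a| * complex.Re `|b|.
Proof.
rewrite !phiE -sqrtrM ?addr_ge0 ?sqr_ge0 //; congr (Num.sqrt _).
by case: a => a1 a2; case: b => b1 b2 /=; ring.
Qed.
Lemma c_phiD a b : complex.Re `|a + b| <= complex.Re `|a| + complex.Re `|b|.
Proof.
have := ler_normD a b.
rewrite lecE => /andP [_].
by rewrite !normc_def /=.
Qed.
Lemma c_phicj a : complex.Re `|conjc a| = complex.Re `|a|.
Proof. by rewrite !phiE; case: a => a1 a2 /=; rewrite sqrrN. Qed.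
Lemma c_phiI (r : R) : complex.Re `|real_complex R r| = `|r|.
Proof. by rewrite phiE /= expr0n /= addr0 sqrtr_sqr. Qed.
End Cplx.

Theorem mainTheorem2 (R : realType) :
  (forall (X : lmodType R) (ip : X -> X -> X -> R),
     is_2inner_product id ip ->
     forall (n : nat) (x : X) (y : 'I_n -> X) (z : X) (p q : R),
       (0 < n)%N -> 1 < p -> p^-1 + q^-1 = 1 ->
       ineq_2ip (fun a : R => `|a|) ip x y z p q) /\
  (forall (X : lmodType R[i]) (ip : X -> X -> X -> R[i]),
     is_2inner_product (@conjc R) ip ->
     forall (n : nat) (x : X) (y : 'I_n -> X) (z : X) (p q : R),
       (0 < n)%N -> 1 < p -> p^-1 + q^-1 = 1 ->
       ineq_2ip (fun a : R[i] => complex.Re `|a|) ip x y z p q).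
Proof.
split.
- move=> X ip [_ [ipge0 [_ [_ [ipC [ipZ ipD]]]]]] n x y z p q n0 p1 pq.
  rewrite /ineq_2ip; cbv zeta.
  have cjD : forall a b : R, id (a + b) = id a + id b by [].
  have cjM : forall a b : R, id (a * b) = id a * id b by [].
  have cjI : forall r : R, id ((idfun : {rmorphism R -> R}) r) = (idfun : {rmorphism R -> R}) r by [].
  have iota_ge0 : forall r : R, 0 <= (idfun : {rmorphism R -> R}) r -> 0 <= r by [].
  have nonneg : forall a : R, 0 <= a -> a = (idfun : {rmorphism R -> R}) `|a|.
    by move=> a a0; rewrite /= ger0_norm.
  have mulcj : forall a : R, a * id a = (idfun : {rmorphism R -> R}) (`|a| ^+ 2).
    by move=> a; rewrite /= real_normK ?num_real // expr2.
  have phiM : forall a b : R, `|a * b| = `|a| * `|b| by move=> a b; rewrite normrM.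
  have phiD : forall a b : R, `|a + b| <= `|a| + `|b| by move=> a b; exact: ler_normD.
  have phi_ge0 : forall a : R, 0 <= `|a| by move=> a; exact: normr_ge0.
  have phicj : forall a : R, `|id a| = `|a| by [].
  have phiI : forall r : R, `|(idfun : {rmorphism R -> R}) r| = `|r| by [].
  have H := @space_main R R id idfun (fun a => `|a|) cjD cjM cjI iota_ge0 nonneg mulcj
    phiM phiD phi_ge0 phicj phiI X ip ipge0 ipC ipZ ipD n x y z.
  apply: (@real_main R n (fun i => `|ip x (y i) z|) (fun i j => `|ip (y i) (y j) z|)
     `|ip x x z| p q) => //.
  all: try (by move=> *; exact: normr_ge0).
- move=> X ip [_ [ipge0 [_ [_ [ipC [ipZ ipD]]]]]] n x y z p q n0 p1 pq.
  rewrite /ineq_2ip; cbv zeta.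
  have H := @space_main R R[i] (@conjc R) (real_complex R) (fun a => complex.Re `|a|)
    (@c_cjD R) (@c_cjM R) (@c_cjI R) (@c_iota_ge0 R) (@c_nonneg R) (@c_mulcj R)
    (@c_phiM R) (@c_phiD R) (@c_phi_ge0 R) (@c_phicj R) (@c_phiI R)
    X ip ipge0 ipC ipZ ipD n x y z.
  apply: (@real_main R n (fun i => complex.Re `|ip x (y i) z|)
     (fun i j => complex.Re `|ip (y i) (y j) z|) (complex.Re `|ip x x z|) p q) => //.
  + by move=> i; exact: c_phi_ge0.
  + by move=> i j; exact: c_phi_ge0.
  + exact: c_phi_ge0.
Qed.
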